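(* Let $m \ge 2$ be an integer, let $n = 6m+1$, and let $G$ be the circulant graph on $n$ vertices with distance set $S = \{m\} \cup \{2m+1, 2m+2, \dots, 3m\}$; equivalently, vertices $u,v \in \mathbb{Z}/n\mathbb{Z}$ are adjacent if and only if $(u - v) \bmod n \in \{m, 5m+1\} \cup \{2m+1, \dots, 4m\}$. Then $G$ is a doubly saturated $R(4, m+2)$-good graph. More precisely: (1) $G$ contains no clique of size $4$; (2) $G$ contains no independent set of size $m+2$; (3) for every non-edge $\{u,v\}$ of $G$, the graph obtained by adding the edge $uv$ contains a clique of size $4$; (4) for every edge $\{u,v\}$ of $G$, the graph obtained by deleting the edge $uv$ contains an independent set of size $m+2$; and $G$ is neither complete nor edgeless.
   Context: For $x \in \mathbb{Z}/n\mathbb{Z}$, let $\|x\| := \min(x \bmod n,\; n - (x \bmod n))$. The circulant graph on $n$ vertices with distance set $S \subseteq \{1,\dots,\lfloor n/2\rfloor\}$ has vertex set $\mathbb{Z}/n\mathbb{Z}$, with $x$ and $y$ adjacent if and only if $\|x-y\| \in S$. A graph $G$ is \emph{$R(s,t)$-good} if it contains no clique of size $s$ and no independent set of size $t$. A graph $G$ is \emph{doubly saturated $R(s,t)$-good} if it is $R(s,t)$-good, adding any single missing edge yields a graph that is not $R(s,t)$-good, removing any single edge yields a graph that is not $R(s,t)$-good, and $G$ is neither complete nor edgeless. *)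

(* Defs.v *)
From mathcomp Require Import all_boot.
Set Implicit Arguments. Unset Strict Implicit. Unset Printing Implicit Defensive.

(* Simple graphs on a finite type T are given by a relation e : rel T,
   intended to be symmetric and irreflexive. *)

Definition is_clique (T : finType) (e : rel T) (A : {set T}) : bool :=
  [forall x in A, forall y in A, (x != y) ==> e x y].

Definition is_indep (T : finType) (e : rel T) (A : {set T}) : bool :=
  [forall x in A, forall y in A, (x != y) ==> ~~ e x y].

Definition has_clique (T : finType) (e : rel T) (s : nat) : Prop :=
  exists A : {set T}, #|A| = s /\ is_clique e A.

Definition has_indep (T : finType) (e : rel T) (t : nat) : Prop :=
  exists A : {set T}, #|A| = t /\ is_indep e A.

Definition Rgood (T : finType) (e : rel T) (s t : nat) : Prop :=
  ~ has_clique e s /\ ~ has_indep e t.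

Definition add_edge (T : finType) (e : rel T) (u v : T) : rel T :=
  fun x y => e x y || ((x == u) && (y == v)) || ((x == v) && (y == u)).

Definition del_edge (T : finType) (e : rel T) (u v : T) : rel T :=
  fun x y => e x y && ~~ (((x == u) && (y == v)) || ((x == v) && (y == u))).

Definition is_complete (T : finType) (e : rel T) : Prop :=
  forall x y : T, x != y -> e x y.

Definition is_edgeless (T : finType) (e : rel T) : Prop :=
  forall x y : T, ~~ e x y.

Definition doubly_saturated (T : finType) (e : rel T) (s t : nat) : Prop :=
  [/\ Rgood e s t,
      (forall u v : T, u != v -> ~~ e u v -> ~ Rgood (add_edge e u v) s t),
      (forall u v : T, e u v -> ~ Rgood (del_edge e u v) s t),
      ~ is_complete e
    & ~ is_edgeless e].

Definition circ_norm (n x : nat) : nat := minn (x %% n) (n - x %% n).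

Definition circulant (n : nat) (S : pred nat) : rel 'I_n :=
  fun x y => S (circ_norm n (x + n - y)).

Definition Sm (m : nat) : pred nat :=
  fun d => (d == m) || ((2 * m + 1 <= d) && (d <= 3 * m)).
Arguments circulant n S : clear implicits.

(* Main.v *)
Require Import Defs.
From mathcomp Require Import all_boot.
From mathcomp Require Import zify.

Definition adjL (m x y : nat) : Prop :=
  x = y + m \/ x + (6*m+1) = y + m \/ x = y + (5*m+1) \/ x + (6*m+1) = y + (5*m+1) \/
  (y + (2*m+1) <= x /\ x <= y + 4*m) \/ (y + (2*m+1) <= x + (6*m+1) /\ x + (6*m+1) <= y + 4*m).

Lemma modlin {n a b : nat} : a < n -> b < n ->
  (b <= a /\ (a + n - b) %% n = a - b) \/ (a < b /\ (a + n - b) %% n = a + n - b).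
Proof.
move=> ha hb; case: (leqP b a) => h.
- left; split => //. have -> : a + n - b = (a - b) + n by lia.
  by rewrite modnDr modn_small //; lia.
- right; split => //. by rewrite modn_small //; lia.
Qed.

Lemma Gchar m (x y : 'I_(6*m+1)) :
  circulant (6*m+1) (Sm m) x y <-> adjL m x y.
Proof.
rewrite /circulant /Sm /circ_norm /adjL.
have := modlin (ltn_ord x) (ltn_ord y).
case => [[h ->]|[h ->]]; have := ltn_ord x; have := ltn_ord y; split; lia.
Qed.

Lemma adj_sym m p q : p < 6*m+1 -> q < 6*m+1 -> adjL m p q -> adjL m q p.
Proof. rewrite /adjL; lia. Qed.

Lemma Gsym m (x y : 'I_(6*m+1)) :
  circulant (6*m+1) (Sm m) x y -> circulant (6*m+1) (Sm m) y x.
Proof. move=> /Gchar h; apply/Gchar; apply: adj_sym => //. Qed.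

Lemma adj_tr {m u p q a b : nat} : u < 6*m+1 -> p < 6*m+1 -> q < 6*m+1 -> a < 6*m+1 -> b < 6*m+1 ->
  (p = u + a \/ p + (6*m+1) = u + a) -> (q = u + b \/ q + (6*m+1) = u + b) ->
  adjL m p q -> adjL m a b.
Proof. rewrite /adjL => hu hp hq ha hb e1 e2 h.
case: e1 => e1; case: e2 => e2; case: h => [h|[h|[h|[h|[h|h]]]]]; lia. Qed.

Lemma adj_tr' {m u p q a b : nat} : u < 6*m+1 -> p < 6*m+1 -> q < 6*m+1 -> a < 6*m+1 -> b < 6*m+1 ->
  (p = u + a \/ p + (6*m+1) = u + a) -> (q = u + b \/ q + (6*m+1) = u + b) ->
  adjL m a b -> adjL m p q.
Proof. rewrite /adjL => hu hp hq ha hb e1 e2 h.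
case: e1 => e1; case: e2 => e2; case: h => [h|[h|[h|[h|[h|h]]]]]; lia. Qed.

Lemma pt_proof n (u : 'I_n) k : (u + k) %% n < n.
Proof. apply: ltn_pmod; exact: leq_ltn_trans (leq0n u) (ltn_ord u). Qed.

Definition pt {n : nat} (u : 'I_n) (k : nat) : 'I_n := Ordinal (@pt_proof n u k).

Lemma pt_val {n : nat} (u : 'I_n) {k : nat} : k < n ->
  ((pt u k : nat) = u + k) \/ ((pt u k : nat) + n = u + k).
Proof.
move=> hk /=; case: (ltnP (u + k) n) => h.
- by left; rewrite modn_small.
- right; have -> : u + k = (u + k - n) + n by lia.
  rewrite modnDr modn_small //; have := ltn_ord u; lia.
Qed.

Lemma pt0 {n : nat} (u : 'I_n) : pt u 0 = u.
Proof. by apply: val_inj; rewrite /= addn0 modn_small. Qed.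

Lemma pt_neq {n : nat} (u : 'I_n) {a b : nat} : a < n -> b < n -> a <> b -> pt u a != pt u b.
Proof.
move=> ha hb hab; apply/negP => /eqP e.
have e' : (pt u a : nat) = pt u b by rewrite e.
have := pt_val u ha; have := pt_val u hb; have := ltn_ord (pt u a); have := ltn_ord (pt u b).
lia.
Qed.

Lemma Gpt {m : nat} (u : 'I_(6*m+1)) {a b : nat} : a < 6*m+1 -> b < 6*m+1 ->
  circulant (6*m+1) (Sm m) (pt u a) (pt u b) -> adjL m a b.
Proof.
move=> ha hb /Gchar h.
exact: (adj_tr (ltn_ord u) (ltn_ord _) (ltn_ord _) ha hb (pt_val u ha) (pt_val u hb) h).
Qed.

Lemma Gpt' {m : nat} (u : 'I_(6*m+1)) {a b : nat} : a < 6*m+1 -> b < 6*m+1 ->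
  adjL m a b -> circulant (6*m+1) (Sm m) (pt u a) (pt u b).
Proof.
move=> ha hb h; apply/Gchar.
exact: (adj_tr' (ltn_ord u) (ltn_ord _) (ltn_ord _) ha hb (pt_val u ha) (pt_val u hb) h).
Qed.

Lemma clique_edge {T : finType} {e : rel T} {A : {set T}} {x y : T} :
  is_clique e A -> x \in A -> y \in A -> x != y -> e x y.
Proof.
by move/forallP => h hx hy hxy; move: (h x); rewrite hx /= => /forallP /(_ y); rewrite hy hxy.
Qed.

Lemma indep_edge {T : finType} {e : rel T} {A : {set T}} {x y : T} :
  is_indep e A -> x \in A -> y \in A -> x != y -> ~~ e x y.
Proof.
by move/forallP => h hx hy hxy; move: (h x); rewrite hx /= => /forallP /(_ y); rewrite hy hxy.
Qed.

Lemma has_clique_ext (T : finType) (r1 r2 : rel T) s :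
  (forall x y, r1 x y = r2 x y) -> has_clique r1 s -> has_clique r2 s.
Proof.
move=> h [A [hA hc]]; exists A; split => //.
apply/forallP => x; apply/implyP => hx; apply/forallP => y; apply/implyP => hy.
apply/implyP => hxy; rewrite -h; exact: clique_edge hc hx hy hxy.
Qed.

Lemma has_indep_ext (T : finType) (r1 r2 : rel T) s :
  (forall x y, r1 x y = r2 x y) -> has_indep r1 s -> has_indep r2 s.
Proof.
move=> h [A [hA hc]]; exists A; split => //.
apply/forallP => x; apply/implyP => hx; apply/forallP => y; apply/implyP => hy.
apply/implyP => hxy; rewrite -h; exact: indep_edge hc hx hy hxy.
Qed.

Lemma add_edgeC (T : finType) (e : rel T) u v x y :
  add_edge e u v x y = add_edge e v u x y.
Proof. by rewrite /add_edge -orbA (orbC ((x == u) && _)) orbA. Qed.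

Lemma del_edgeC (T : finType) (e : rel T) u v x y :
  del_edge e u v x y = del_edge e v u x y.
Proof. by rewrite /del_edge orbC. Qed.

Lemma uniq4 (T : eqType) (a b c d : T) :
  a != b -> a != c -> a != d -> b != c -> b != d -> c != d -> uniq [:: a; b; c; d].
Proof.
move=> *; rewrite /= !inE !negb_or; repeat (apply/andP; split) => //.
Qed.

Lemma clique4 (T : finType) (r : rel T) a b c d :
  uniq [:: a; b; c; d] -> (forall x y, r x y -> r y x) ->
  r a b -> r a c -> r a d -> r b c -> r b d -> r c d -> has_clique r 4.
Proof.
move=> hu hs hab hac had hbc hbd hcd.
exists [set x in [:: a; b; c; d]]; split.
  by rewrite cardsE; apply/card_uniqP.
apply/forallP => x; apply/implyP; rewrite inE => hx.
apply/forallP => y; apply/implyP; rewrite inE => hy; apply/implyP => hne.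
move: hx hy hne; rewrite !inE.
case/or4P => /eqP ->; case/or4P => /eqP ->; rewrite ?eqxx // => _; by auto.
Qed.

Lemma four_sorted {N : nat} (A : {set 'I_N}) : #|A| = 4 ->
  exists a b c d : 'I_N, [/\ a \in A, b \in A, c \in A & d \in A] /\
    [/\ (a < b)%N, (b < c)%N & (c < d)%N].
Proof.
move=> hA.
set s := sort (fun x y : 'I_N => (x <= y)%N) (enum A).
have hs : size s = 4 by rewrite size_sort -cardE.
have hu : uniq s by rewrite sort_uniq enum_uniq.
have hso : sorted (fun x y : 'I_N => (x <= y)%N) s.
  by apply: sort_sorted => x y; exact: leq_total.
have hm : forall x, x \in s -> x \in A by move=> x; rewrite mem_sort mem_enum.
move: hs hu hso hm; case: s => [|a [|b [|c [|d [|e l]]]]] //= _.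
rewrite !inE !negb_or => /and4P [/and3P [hab hac had] /andP [hbc hbd] hcd _] /and4P [h1 h2 h3 _] hm.
exists a, b, c, d; split; first by split; apply: hm; rewrite !inE eqxx ?orbT.
have ne : forall x y : 'I_N, x != y -> (x : nat) != y by move=> x y; rewrite -val_eqE.
move: (ne _ _ hab) (ne _ _ hbc) (ne _ _ hcd); split; lia.
Qed.

Definition adj3 m x y := x = y + m \/ x = y + (5*m+1) \/ (y + (2*m+1) <= x /\ x <= y + 4*m).

Lemma adj3L m x y : y < x -> x < 6*m+1 -> adjL m x y -> adj3 m x y.
Proof. rewrite /adjL /adj3; lia. Qed.

Lemma noK4_arith m a b c d : 2 <= m -> a < b -> b < c -> c < d -> d < 6*m+1 ->
  adj3 m b a -> adj3 m c b -> adj3 m d c -> adj3 m c a -> adj3 m d b -> adj3 m d a -> False.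
Proof. rewrite /adj3; lia. Qed.

Lemma noK4 m : 2 <= m -> ~ has_clique (circulant (6*m+1) (Sm m)) 4.
Proof.
move=> hm [A [hA hc]].
have [a [b [c [d [[ha hb hc' hd] [hab hbc hcd]]]]]] := four_sorted A hA.
have ne : forall x y : 'I_(6*m+1), (x : nat) < y -> y != x.
  by move=> x y h; rewrite -val_eqE /=; lia.
have E : forall x y : 'I_(6*m+1), x \in A -> y \in A -> (x : nat) < y -> adj3 m y x.
  move=> x y hx hy hxy; apply: (@adj3L m y x hxy (ltn_ord y)).
  by apply/Gchar; apply: (clique_edge hc hy hx); apply: ne.
apply: (@noK4_arith m a b c d hm hab hbc hcd (ltn_ord d)).
- exact: E.
- exact: E.
- exact: E.
- apply: E => //; lia.
- apply: E => //; lia.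
- apply: E => //; lia.
Qed.

Definition cls m t := if t < m then t else if t < 2*m then t - m else m.
Lemma cls_le m t : cls m t < m.+1.
Proof. rewrite /cls; case: ifP => h1; [lia|case: ifP => h2; lia]. Qed.
Lemma clsP m t : (cls m t = t /\ t < m) \/ (cls m t = t - m /\ m <= t < 2*m) \/ (cls m t = m /\ 2*m <= t).
Proof. rewrite /cls; case: ifP => h1; [lia|case: ifP => h2; lia]. Qed.

Lemma indep_bound m (T : finType) (I : {set T}) (phi : T -> nat) :
  (forall x y, x \in I -> y \in I -> x != y ->
     phi x <> phi y /\ phi y <= phi x + 2*m /\ phi x + m <> phi y) -> #|I| <= m+1.
Proof.
move=> H; case: (set_0Vmem I) => [-> | [x1 hx1]]; first by rewrite cards0.
have [x0 hx0 hmin] := arg_minnP phi hx1.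
pose g x : 'I_m.+1 := inord (cls m (phi x - phi x0)).
have bnd : forall x, x \in I -> phi x0 <= phi x <= phi x0 + 2*m.
  move=> x hx; rewrite hmin //=; case: (eqVneq x x0) => [-> | hne]; first lia.
  have := H _ _ hx0 hx (ltac:(by rewrite eq_sym)); lia.
have inj : {in I &, injective g}.
  move=> x y hx hy /(congr1 (@nat_of_ord _)); rewrite /g !inordK ?cls_le // => e.
  apply/eqP; apply: contraT => hne.
  have := H _ _ hx hy hne; have := H _ _ hy hx (ltac:(by rewrite eq_sym)).
  have := bnd _ hx; have := bnd _ hy.
  move: e; have := clsP m (phi x - phi x0); have := clsP m (phi y - phi x0); lia.
rewrite -(card_in_imset inj) addn1.
by apply: leq_trans (max_card _) _; rewrite card_ord.
Qed.

Definition N0 m f := f < m \/ (m < f /\ f <= 2*m) \/ (4*m < f /\ f <= 5*m) \/ (5*m+1 < f /\ f <= 6*m).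

Lemma nonadj_N0 {m a b : nat} : a < 6*m+1 -> b < 6*m+1 -> ~ adjL m a b ->
  N0 m ((a + (6*m+1) - b) %% (6*m+1)).
Proof.
move=> ha hb hn.
have hf : (a + (6*m+1) - b) %% (6*m+1) < 6*m+1 by apply: ltn_pmod; lia.
have [h|h] : N0 m ((a + (6*m+1) - b) %% (6*m+1)) \/
   ((a + (6*m+1) - b) %% (6*m+1) = m \/ (a + (6*m+1) - b) %% (6*m+1) = 5*m+1 \/
    (2*m+1 <= (a + (6*m+1) - b) %% (6*m+1) <= 4*m)) by rewrite /N0; lia.
- exact h.
- exfalso; apply: hn; rewrite /adjL.
  case: (modlin ha hb) => [[h1 h2]|[h1 h2]]; rewrite h2 in h; lia.
Qed.

Lemma phi_arith {m ox oy f px py : nat} : 2 <= m -> ox <> oy -> ox <= 6*m -> oy <= 6*m ->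
 (ox <= 2*m \/ 4*m < ox) -> (oy <= 2*m \/ 4*m < oy) -> N0 m f ->
 ((oy <= ox /\ f = ox - oy) \/ (ox < oy /\ f = ox + (6*m+1) - oy)) ->
 ((px = ox + 2*m /\ ox <= 2*m) \/ (px = ox - (4*m+1) /\ 2*m < ox)) ->
 ((py = oy + 2*m /\ oy <= 2*m) \/ (py = oy - (4*m+1) /\ 2*m < oy)) ->
 px <> py /\ py <= px + 2*m /\ px + m <> py.
Proof. rewrite /N0 => hm hne hx6 hy6 hx hy hf hr hp hq.
case: hp => [[-> hp]|[-> hp]]; case: hq => [[-> hq]|[-> hq]]; case: hr => [[hr ->]|[hr ->]] in hf *; lia. Qed.

Lemma rel_arith {m x y z ox oy f : nat} : x < 6*m+1 -> y < 6*m+1 -> z < 6*m+1 -> x <> y ->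
  ((z <= x /\ ox = x - z) \/ (x < z /\ ox = x + (6*m+1) - z)) ->
  ((z <= y /\ oy = y - z) \/ (y < z /\ oy = y + (6*m+1) - z)) ->
  ((y <= x /\ f = x - y) \/ (x < y /\ f = x + (6*m+1) - y)) ->
  ox <> oy /\ ((oy <= ox /\ f = ox - oy) \/ (ox < oy /\ f = ox + (6*m+1) - oy)).
Proof.
move=> hx hy hz hne [[h1 ->]|[h1 ->]] [[h2 ->]|[h2 ->]] [[h3 ->]|[h3 ->]]; lia.
Qed.

Definition ph m o := if o <= 2*m then o + 2*m else o - (4*m+1).
Lemma phP m o : (ph m o = o + 2*m /\ o <= 2*m) \/ (ph m o = o - (4*m+1) /\ 2*m < o).
Proof. rewrite /ph; case: ifP => h; lia. Qed.
Lemma lt6 {m o : nat} : o < 6*m+1 -> o <= 6*m.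
Proof. lia. Qed.
Lemma N0lh {m o : nat} : N0 m o -> o <= 2*m \/ 4*m < o.
Proof. rewrite /N0; lia. Qed.

Lemma no_indep m : 2 <= m -> ~ has_indep (circulant (6*m+1) (Sm m)) (m+2).
Proof.
move=> hm [I [hI hind]].
suff : #|I| <= m+1 by rewrite hI; lia.
have [z hz] : exists z, z \in I by apply/card_gt0P; rewrite hI addn2.
have nadj : forall x y, x \in I -> y \in I -> ~ adjL m x y.
  move=> x y hx hy; case: (eqVneq x y) => [-> | hne].
    by rewrite /adjL; lia.
  move=> /Gchar h; have := indep_edge hind hx hy hne; by rewrite h.
have n0 : 0 < 6*m+1 by rewrite addn1.
pose o (x : 'I_(6*m+1)) := (x + (6*m+1) - z) %% (6*m+1).
pose phi x := ph m (o x).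
apply: (@indep_bound m _ I phi) => x y hx hy hne.
have hxy : (x : nat) <> y by move=> e; move: hne; rewrite -val_eqE /= e eqxx.
have Nx := nonadj_N0 (ltn_ord x) (ltn_ord z) (nadj _ _ hx hz).
have Ny := nonadj_N0 (ltn_ord y) (ltn_ord z) (nadj _ _ hy hz).
have Nf := nonadj_N0 (ltn_ord x) (ltn_ord y) (nadj _ _ hx hy).
have [ho hr] := rel_arith (ltn_ord x) (ltn_ord y) (ltn_ord z) hxy
  (modlin (ltn_ord x) (ltn_ord z)) (modlin (ltn_ord y) (ltn_ord z))
  (modlin (ltn_ord x) (ltn_ord y)).
exact: (phi_arith hm ho (lt6 (ltn_pmod _ n0)) (lt6 (ltn_pmod _ n0)) (N0lh Nx) (N0lh Ny) Nf hr (phP _ _) (phP _ _)).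
Qed.

Lemma ord_eq {n : nat} (x y : 'I_n) : (x : nat) = y -> x = y.
Proof. exact: val_inj. Qed.

Lemma clique_fwd {m : nat} (u : 'I_(6*m+1)) {d : nat} : 2 <= m -> 1 <= d <= 2*m -> d <> m ->
  has_clique (add_edge (circulant (6*m+1) (Sm m)) (pt u 0) (pt u d)) 4.
Proof.
move=> hm hd hdm.
have hsym : forall x y, add_edge (circulant (6*m+1) (Sm m)) (pt u 0) (pt u d) x y -> add_edge (circulant (6*m+1) (Sm m)) (pt u 0) (pt u d) y x.
  move=> x y; rewrite /add_edge => /orP [/orP [/Gsym -> // | h] | h].
    by case/andP: h => /eqP -> /eqP ->; rewrite !eqxx ?orbT.
  by case/andP: h => /eqP -> /eqP ->; rewrite !eqxx ?orbT.
have hG : forall a b, a < 6*m+1 -> b < 6*m+1 -> adjL m a b ->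
    add_edge (circulant (6*m+1) (Sm m)) (pt u 0) (pt u d) (pt u a) (pt u b).
  by move=> a b ha hb h; rewrite /add_edge (Gpt' u ha hb h).
have huv : add_edge (circulant (6*m+1) (Sm m)) (pt u 0) (pt u d) (pt u 0) (pt u d) by rewrite /add_edge !eqxx orbT.
case: (ltnP d m) => hdm'.
- apply: (@clique4 _ _ (pt u 0) (pt u d) (pt u (3*m)) (pt u (4*m))).
  + apply: uniq4; apply: pt_neq; lia.
  + exact: hsym.
  + exact: huv.
  + apply: (hG 0 (3*m)); try rewrite /adjL; lia.
  + apply: (hG 0 (4*m)); try rewrite /adjL; lia.
  + apply: (hG d (3*m)); try rewrite /adjL; lia.
  + apply: (hG d (4*m)); try rewrite /adjL; lia.
  + apply: (hG (3*m) (4*m)); try rewrite /adjL; lia.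
- apply: (@clique4 _ _ (pt u 0) (pt u d) (pt u (d+m)) (pt u (5*m+1))).
  + apply: uniq4; apply: pt_neq; lia.
  + exact: hsym.
  + exact: huv.
  + apply: (hG 0 (d+m)); try rewrite /adjL; lia.
  + apply: (hG 0 (5*m+1)); try rewrite /adjL; lia.
  + apply: (hG d (d+m)); try rewrite /adjL; lia.
  + apply: (hG d (5*m+1)); try rewrite /adjL; lia.
  + apply: (hG (d+m) (5*m+1)); try rewrite /adjL; lia.
Qed.

Lemma part3 m : 2 <= m -> forall u v : 'I_(6*m+1), u != v ->
  ~~ circulant (6*m+1) (Sm m) u v -> has_clique (add_edge (circulant (6*m+1) (Sm m)) u v) 4.
Proof.
move=> hm u v huv hn.
have hn' : ~ adjL m v u by move=> /Gchar /Gsym h; rewrite h in hn.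
have N := nonadj_N0 (ltn_ord v) (ltn_ord u) hn'.
have ML := modlin (ltn_ord v) (ltn_ord u).
have hd : (v + (6*m+1) - u) %% (6*m+1) < 6*m+1 by apply: ltn_pmod; rewrite addn1.
move: N ML hd; set d := (v + (6*m+1) - u) %% (6*m+1) => N ML hd.
have hne : (u:nat) <> v by move=> e; move: huv; rewrite -val_eqE /= e eqxx.
have hu := ltn_ord u; have hv := ltn_ord v.
case: (leqP d (2*m)) => hd2.
- have ev : v = pt u d.
    by apply: ord_eq; have := ltn_ord (pt u d); have := pt_val u hd; move: N; rewrite /N0; lia.
  have := @clique_fwd m u d hm ltac:(lia) ltac:(move: N; rewrite /N0; lia).
  by rewrite pt0 -ev.
- have hd' : 6*m+1 - d < 6*m+1 by lia.
  have eu : u = pt v (6*m+1 - d).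
    by apply: ord_eq; have := ltn_ord (pt v (6*m+1-d)); have := pt_val v hd'; move: N; rewrite /N0; lia.
  have := @clique_fwd m v (6*m+1 - d) hm ltac:(move: N; rewrite /N0; lia) ltac:(move: N; rewrite /N0; lia).
  rewrite pt0 -eu => h; apply: has_clique_ext h => x y; exact: add_edgeC.
Qed.

Definition specA m i o := (i < m-1 /\ o = i) \/ (i = m-1 /\ o = 6*m) \/ (i = m /\ o = m) \/ (i = m+1 /\ o = 2*m-1).
Definition specB m d i o := (i = 0 /\ o = 0) \/ (i = 1 /\ o = d) \/ (i = 2 /\ o = 2*m) \/
   (3 <= i < m+2 /\ d-2*m+i-3 < m /\ o = d-2*m+i-3) \/ (3 <= i < m+2 /\ m <= d-2*m+i-3 /\ o = d-2*m+i-2).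
Definition specC m i o := (i = 0 /\ o = 0) \/ (i = 1 /\ o = 3*m) \/ (2 <= i < m+2 /\ o = 4*m-1+i).

Lemma indA {m i j oi oj : nat} : 2 <= m -> specA m i oi -> specA m j oj -> adjL m oi oj ->
  (oi = 0 /\ oj = m) \/ (oi = m /\ oj = 0).
Proof. rewrite /specA /adjL => hm hi hj.
case: hi => [[hi ->]|[[hi ->]|[[hi ->]|[hi ->]]]]; case: hj => [[hj ->]|[[hj ->]|[[hj ->]|[hj ->]]]]; lia. Qed.

Lemma indB {m d i j oi oj : nat} : 2 <= m -> 2*m+1 <= d <= 3*m-1 -> specB m d i oi -> specB m d j oj -> adjL m oi oj ->
  (oi = 0 /\ oj = d) \/ (oi = d /\ oj = 0).
Proof. rewrite /specB /adjL => hm hd hi hj.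
case: hi => [[hi ->]|[[hi ->]|[[hi ->]|[[hi [hi' ->]]|[hi [hi' ->]]]]]]; case: hj => [[hj ->]|[[hj ->]|[[hj ->]|[[hj [hj' ->]]|[hj [hj' ->]]]]]]; lia. Qed.

Lemma indC {m i j oi oj : nat} : 2 <= m -> specC m i oi -> specC m j oj -> adjL m oi oj ->
  (oi = 0 /\ oj = 3*m) \/ (oi = 3*m /\ oj = 0).
Proof. rewrite /specC /adjL => hm hi hj.
case: hi => [[hi ->]|[[hi ->]|[hi ->]]]; case: hj => [[hj ->]|[[hj ->]|[hj ->]]]; lia. Qed.

Lemma injA {m i j oi oj : nat} : 2 <= m -> specA m i oi -> specA m j oj -> oi = oj -> i = j.
Proof. rewrite /specA => hm hi hj.
case: hi => [[hi ->]|[[hi ->]|[[hi ->]|[hi ->]]]]; case: hj => [[hj ->]|[[hj ->]|[[hj ->]|[hj ->]]]]; lia. Qed.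

Lemma injB {m d i j oi oj : nat} : 2 <= m -> 2*m+1 <= d <= 3*m-1 -> specB m d i oi -> specB m d j oj -> oi = oj -> i = j.
Proof. rewrite /specB => hm hd hi hj.
case: hi => [[hi ->]|[[hi ->]|[[hi ->]|[[hi [hi' ->]]|[hi [hi' ->]]]]]]; case: hj => [[hj ->]|[[hj ->]|[[hj ->]|[[hj [hj' ->]]|[hj [hj' ->]]]]]]; lia. Qed.

Lemma injC {m i j oi oj : nat} : 2 <= m -> specC m i oi -> specC m j oj -> oi = oj -> i = j.
Proof. rewrite /specC => hm hi hj.
case: hi => [[hi ->]|[[hi ->]|[hi ->]]]; case: hj => [[hj ->]|[[hj ->]|[hj ->]]]; lia. Qed.

Definition offA m i := if i < m-1 then i else if i == m-1 then 6*m else if i == m then m else 2*m-1.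
Definition offB m d i := if i == 0 then 0 else if i == 1 then d else if i == 2 then 2*m
  else if d-2*m+i-3 < m then d-2*m+i-3 else d-2*m+i-2.
Definition offC m i := if i == 0 then 0 else if i == 1 then 3*m else 4*m-1+i.

Lemma offA_spec {m i : nat} : 2 <= m -> i < m+2 -> specA m i (offA m i).
Proof.
move=> hm hi; rewrite /offA /specA; case: ltnP => h1; first lia.
case: eqP => h2; first lia. case: eqP => h3; lia.
Qed.

Lemma offB_spec {m d i : nat} : 2 <= m -> 2*m+1 <= d <= 3*m-1 -> i < m+2 -> specB m d i (offB m d i).
Proof.
move=> hm hd hi; rewrite /offB /specB; case: eqP => h1; first lia.
case: eqP => h2; first lia. case: eqP => h3; first lia. case: ltnP => h4; lia.
Qed.

Lemma offC_spec {m i : nat} : 2 <= m -> i < m+2 -> specC m i (offC m i).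
Proof.
move=> hm hi; rewrite /offC /specC; case: eqP => h1; first lia.
case: eqP => h2; lia.
Qed.

Lemma indep_gen {m : nat} (u : 'I_(6*m+1)) {d : nat} (off : nat -> nat) :
 (forall i, i < m+2 -> off i < 6*m+1) ->
 (forall i j, i < m+2 -> j < m+2 -> off i = off j -> i = j) ->
 (forall i j, i < m+2 -> j < m+2 -> adjL m (off i) (off j) ->
     (off i = 0 /\ off j = d) \/ (off i = d /\ off j = 0)) ->
 has_indep (del_edge (circulant (6*m+1) (Sm m)) (pt u 0) (pt u d)) (m+2).
Proof.
move=> hb hinj hadj.
pose f (i : 'I_(m+2)) := pt u (off i).
have finj : injective f.
  move=> i j e; apply: val_inj; apply: hinj; try exact: ltn_ord.
  case: (eqVneq (off i) (off j)) => [//|hne].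
  by have := pt_neq u (hb _ (ltn_ord i)) (hb _ (ltn_ord j)) (elimN eqP hne); rewrite /f in e; rewrite e eqxx.
exists (f @: [set: 'I_(m+2)]); split.
  by rewrite card_imset // cardsT card_ord.
apply/forallP => x; apply/implyP => /imsetP [i _ ->].
apply/forallP => y; apply/implyP => /imsetP [j _ ->].
apply/implyP => hne.
rewrite /del_edge negb_and negbK.
case hG : (circulant _ _ (f i) (f j)) => //=.
have := hadj _ _ (ltn_ord i) (ltn_ord j) (Gpt u (hb _ (ltn_ord i)) (hb _ (ltn_ord j)) hG).
by rewrite /f; case => [[-> ->]|[-> ->]]; rewrite !eqxx ?orbT.
Qed.

Lemma indep_fwd {m : nat} (u : 'I_(6*m+1)) {d : nat} : 2 <= m -> (d = m \/ 2*m+1 <= d <= 3*m) ->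
  has_indep (del_edge (circulant (6*m+1) (Sm m)) (pt u 0) (pt u d)) (m+2).
Proof.
move=> hm [-> | hd].
- apply: (indep_gen u (offA m)).
  + move=> i hi; have := offA_spec hm hi; rewrite /specA; lia.
  + move=> i j hi hj; exact: injA hm (offA_spec hm hi) (offA_spec hm hj).
  + move=> i j hi hj; exact: indA hm (offA_spec hm hi) (offA_spec hm hj).
- case: (ltnP d (3*m)) => hd3.
  + have hd' : 2*m+1 <= d <= 3*m-1 by lia.
    apply: (indep_gen u (offB m d)).
    * move=> i hi; have := offB_spec hm hd' hi; rewrite /specB; lia.
    * move=> i j hi hj; exact: injB hm hd' (offB_spec hm hd' hi) (offB_spec hm hd' hj).
    * move=> i j hi hj; exact: indB hm hd' (offB_spec hm hd' hi) (offB_spec hm hd' hj).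
  + have -> : d = 3*m by lia.
    apply: (indep_gen u (offC m)).
    * move=> i hi; have := offC_spec hm hi; rewrite /specC; lia.
    * move=> i j hi hj; exact: injC hm (offC_spec hm hi) (offC_spec hm hj).
    * move=> i j hi hj; exact: indC hm (offC_spec hm hi) (offC_spec hm hj).
Qed.

Lemma part4 m : 2 <= m -> forall u v : 'I_(6*m+1),
  circulant (6*m+1) (Sm m) u v -> has_indep (del_edge (circulant (6*m+1) (Sm m)) u v) (m+2).
Proof.
move=> hm u v ha.
have ha' : adjL m v u by apply/Gchar; exact: Gsym.
have ML := modlin (ltn_ord v) (ltn_ord u).
have hd : (v + (6*m+1) - u) %% (6*m+1) < 6*m+1 by apply: ltn_pmod; rewrite addn1.
have hu := ltn_ord u; have hv := ltn_ord v.
have [D1|D2] : ((v + (6*m+1) - u) %% (6*m+1) = m \/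
     2*m+1 <= (v + (6*m+1) - u) %% (6*m+1) <= 3*m) \/
   ((v + (6*m+1) - u) %% (6*m+1) = 5*m+1 \/
     3*m+1 <= (v + (6*m+1) - u) %% (6*m+1) <= 4*m).
  by move: ha'; rewrite /adjL; case: ML => [[h1 ->]|[h1 ->]]; lia.
- move: D1 ML hd; set d := (v + (6*m+1) - u) %% (6*m+1) => D1 ML hd.
  have ev : v = pt u d.
    by apply: ord_eq; have := ltn_ord (pt u d); have := pt_val u hd; lia.
  by have := @indep_fwd m u d hm D1; rewrite pt0 -ev.
- move: D2 ML hd; set d := (v + (6*m+1) - u) %% (6*m+1) => D2 ML hd.
  have hd' : 6*m+1 - d < 6*m+1 by lia.
  have eu : u = pt v (6*m+1 - d).
    by apply: ord_eq; have := ltn_ord (pt v (6*m+1-d)); have := pt_val v hd'; lia.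
  have := @indep_fwd m v (6*m+1 - d) hm ltac:(lia).
  rewrite pt0 -eu => h; apply: has_indep_ext h => x y; exact: del_edgeC.
Qed.

Theorem mainTheorem2 (m : nat) (hm : 2 <= m) :
  let n := 6 * m + 1 in
  let G := circulant n (Sm m) in
  doubly_saturated G 4 (m + 2)
  /\ (forall u v : 'I_n, u != v -> ~~ G u v -> has_clique (add_edge G u v) 4)
  /\ (forall u v : 'I_n, G u v -> has_indep (del_edge G u v) (m + 2)).
Proof.
move=> n G; rewrite {}/G {}/n.
have h1 := noK4 m hm; have h2 := no_indep m hm.
have h3 := part3 m hm; have h4 := part4 m hm.
split; last by split.
have n0 : 0 < 6*m+1 by rewrite addn1.
have n1 : 1 < 6*m+1 by lia.
have nm : m < 6*m+1 by lia.
split.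
- by split.
- by move=> u v huv hn [hc _]; apply: hc; exact: h3.
- by move=> u v huv [_ hi]; apply: hi; exact: h4.
- move=> hc; have := hc (Ordinal n0) (Ordinal n1) isT.
  by move/Gchar; rewrite /adjL /=; lia.
- move=> he; have := he (Ordinal n0) (Ordinal nm); apply/negP/negPn.
  by apply/Gchar; rewrite /adjL /=; lia.
Qed.
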